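(* Let $A$ be a unital associative (not necessarily commutative) $\mathbb{K}$-algebra. The right-shift operator $P_A$ on $(T(A),\bullet^\ell)$ satisfies the $TD$-relation: for all $U,V\in T(A)$, $$P_A(U)\bullet^\ell P_A(V)=P_A\bigl(U\bullet^\ell P_A(V)\bigr)+P_A\bigl(P_A(U)\bullet^\ell V\bigr)-P_A\bigl(U\bullet^\ell P_A(1_{\mathbb{K}})\bullet^\ell V\bigr).$$ Hence $(T(A),\bullet^\ell,P_A)$ is a unital $TD$-algebra.
   Context: $\mathbb{K}$ is a field of characteristic $0$, $A$ has product $[a;b]$ and unit $1_A$. $T(A)=\bigoplus_{n\ge0}A^{\otimes n}$ with $A^{\otimes0}=\mathbb{K}1_{\mathbb{K}}$; $a\otimes1_{\mathbb{K}}$ is identified with $a$. The left-shift shuffle $\bullet^\ell$ is the bilinear product on $T(A)$ with $k1_{\mathbb{K}}\bullet^\ell U=kU=U\bullet^\ell k1_{\mathbb{K}}$ and, for $a,b\in A$, $U,V\in T(A)$, $(a\otimes U)\bullet^\ell(b\otimes V)=a\otimes\bigl(U\bullet^\ell(b\otimes V)\bigr)+b\otimes\bigl((a\otimes U)\bullet^\ell V\bigr)-[a;b]\otimes1_A\otimes(U\bullet^\ell V)$; it is associative with unit $1_{\mathbb{K}}$. The right-shift map $P_A:T(A)\to T(A)$ is the linear map $P_A(U)=1_A\otimes U$ for words $U$ of positive length and $P_A(1_{\mathbb{K}})=1_A$. A $TD$-algebra is a pair $(B,P)$, $B$ a unital associative algebra, $P:B\to B$ linear with $P(x)P(y)=P\bigl(P(x)y+xP(y)\bigr)-P\bigl(x\,P(1_B)\,y\bigr)$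 for all $x,y$. *)

(* Defs.v *)
From HB Require Import structures.
From mathcomp Require Import all_boot all_order all_algebra.
Set Implicit Arguments. Unset Strict Implicit. Unset Printing Implicit Defensive.
Import GRing.Theory.
Local Open Scope ring_scope.

Definition lin_fun (K : pzRingType) (V W : lmodType K) (g : V -> W) : Prop :=
  forall (k : K) (x y : V), g (k *: x + y) = k *: g x + g y.

(* A family (indexed by the length n) of n-multilinear maps A^n -> W,
   presented as a single map on words. *)
Definition multilinear (K : pzRingType) (A W : lmodType K) (f : seq A -> W) : Prop :=
  forall (u v : seq A) (a b : A) (k : K),
    f (u ++ (k *: a + b) :: v) = k *: f (u ++ a :: v) + f (u ++ b :: v).

(* (T, iota) is the tensor module T(A) = (+)_{n>=0} A^{(x)n}, with
   iota [:: a1; ...; an] = a1 (x) ... (x) an and iota [::] = 1_K :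
   universal for families of multilinear maps (one for each n). *)
Definition is_tensor_module (K : pzRingType) (A T : lmodType K) (iota : seq A -> T) : Prop :=
  multilinear iota /\
  forall (W : lmodType K) (f : seq A -> W), multilinear f ->
    (exists g : T -> W, lin_fun g /\ forall w, g (iota w) = f w) /\
    (forall g1 g2 : T -> W, lin_fun g1 -> lin_fun g2 ->
       (forall w, g1 (iota w) = g2 (iota w)) -> forall x, g1 x = g2 x).

Definition is_TD_algebra (K : pzRingType) (B : lmodType K)
    (mul : B -> B -> B) (one : B) (P : B -> B) : Prop :=
  [/\ (forall x y z, mul x (mul y z) = mul (mul x y) z),
      (forall x, mul one x = x /\ mul x one = x),
      (forall x, lin_fun (mul x)) /\ (forall y, lin_fun (fun x => mul x y)),
      lin_fun P &
      (forall x y, mul (P x) (P y) =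
         P (mul (P x) y + mul x (P y)) - P (mul (mul x (P one)) y))].

(* Main.v *)
Require Import Defs.
From HB Require Import structures.
From mathcomp Require Import all_boot all_order all_algebra.
Import GRing.Theory.
Local Open Scope ring_scope.

Theorem proposition4p6
  (K : fieldType) (charK0 : [pchar K] =i pred0)
  (A : algType K)
  (T : lmodType K) (iota : seq A -> T)
  (HT : is_tensor_module iota)
  (* a (x) - : T(A) -> T(A), the linear map a (x) U *)
  (left : A -> T -> T)
  (Hleft_lin : forall a, lin_fun (left a))
  (Hleft : forall a w, left a (iota w) = iota (a :: w))
  (* the left-shift shuffle product *)
  (mul : T -> T -> T)
  (Hmul_linr : forall U, lin_fun (mul U))
  (Hmul_linl : forall V, lin_fun (fun U => mul U V))
  (Hmul_unitl : forall (k : K) U, mul (k *: iota [::]) U = k *: U)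
  (Hmul_unitr : forall (k : K) U, mul U (k *: iota [::]) = k *: U)
  (Hmul_rec : forall (a b : A) (U V : T),
     mul (left a U) (left b V) =
       left a (mul U (left b V)) + left b (mul (left a U) V)
       - left (a * b) (left 1 (mul U V)))
  (Hmul_assoc : forall U V W, mul U (mul V W) = mul (mul U V) W)
  (* the right-shift map P_A *)
  (P : T -> T)
  (HP_lin : lin_fun P)
  (HP_word : forall w : seq A, w != [::] -> P (iota w) = iota (1 :: w))
  (HP_one : P (iota [::]) = iota [:: 1]) :
  (forall U V : T,
     mul (P U) (P V) =
       P (mul U (P V)) + P (mul (P U) V)
       - P (mul (mul U (P (iota [::]))) V)) /\
  is_TD_algebra mul (iota [::]) P.
Proof.
have ext : forall g1 g2 : T -> T, lin_fun g1 -> lin_fun g2 ->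
    (forall w, g1 (iota w) = g2 (iota w)) -> forall x, g1 x = g2 x.
  move=> g1 g2 h1 h2 hw; case: HT => Hml Hu.
  have mf : multilinear (fun w => g1 (iota w)).
    by move=> u v a b k /=; rewrite Hml h1.
  exact: ((Hu T _ mf).2 g1 g2 h1 h2 hw).
have hPL : forall x, P x = left 1 x.
  apply: ext => //; case => [|a w]; first by rewrite HP_one Hleft.
  by rewrite HP_word // Hleft.
have u1 : forall U, mul (iota [::]) U = U.
  by move=> U; rewrite -{1}[iota [::]]scale1r Hmul_unitl scale1r.
have ur : forall U, mul U (iota [::]) = U.
  by move=> U; rewrite -[iota [::]]scale1r Hmul_unitr scale1r.
have C1 : forall U, mul U (left 1 (iota [::])) = left 1 U.
  apply: (ext (fun U => mul U (left 1 (iota [::]))) (left 1)) => //.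
  elim => [|a w IH]; first by rewrite u1.
  rewrite -Hleft Hmul_rec IH !ur mulr1.
  by rewrite addrAC subrr add0r.

have C2 : forall U, mul (left 1 (iota [::])) U = left 1 U.
  apply: (ext (fun U => mul (left 1 (iota [::])) U) (left 1)) => //.
  elim => [|a w IH]; first by rewrite ur.
  rewrite -Hleft Hmul_rec IH !u1 mul1r.
  by rewrite addrK.
have C3 : forall U V, mul (left 1 U) V = left 1 (mul U V).
  by move=> U V; rewrite -(C2 U) -Hmul_assoc C2.
have TD : forall U V : T,
     mul (P U) (P V) =
       P (mul U (P V)) + P (mul (P U) V)
       - P (mul (mul U (P (iota [::]))) V).
  by move=> U V; rewrite !hPL Hmul_rec mulr1 C1 C3.
have Padd : forall x y, P (x + y) = P x + P y.
  by move=> x y; have := HP_lin 1 x y; rewrite !scale1r.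
split; first exact: TD.
rewrite /is_TD_algebra; split.
- exact: Hmul_assoc.
- by move=> x; split; [apply: u1 | apply: ur].
- by split.
- exact: HP_lin.
- by move=> x y; rewrite TD Padd (addrC (P (mul (P x) y))).
Qed.
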